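(* Let $2s$ be a positive integer and let $f_0,f_1,\dots,f_{2s}$ be the Veronese sequence (defined in the context). Then for all $0\le k\le 2s$, $0\le j\le 2s$ and all $\xi_+\in\mathbb{C}\setminus\{0\}$, $$(f_k)_j=\frac{(2s)!}{(2s-k)!}\left(\frac{-\xi_-}{1+\xi_+\xi_-}\right)^k\sqrt{\binom{2s}{j}}\,\xi_+^j\,K_j(k;p,2s),$$ and the rank-1 Hermitian projectors $P_k=\frac{f_k f_k^\dagger}{f_k^\dagger f_k}$ have entries $$(P_k)_{ij}=\binom{2s}{k}\frac{(\xi_+\xi_-)^k}{(1+\xi_+\xi_-)^{2s}}\,\xi_+^i\xi_-^j\sqrt{\binom{2s}{i}\binom{2s}{j}}\,K_i(k;p,2s)K_j(k;p,2s),\qquad 0\le i,j\le 2s.$$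
   Context: Let $2s\in\mathbb{Z}_{>0}$. Let $\xi_+\in\mathbb{C}$, $\xi_-=\overline{\xi_+}$ (with $\xi_\pm=\xi^1\pm i\xi^2$), and set $p=\frac{\xi_+\xi_-}{1+\xi_+\xi_-}$. Let $\partial=\frac12(\partial_{\xi^1}-i\partial_{\xi^2})$ and $\bar\partial=\frac12(\partial_{\xi^1}+i\partial_{\xi^2})$. Vectors in $\mathbb{C}^{2s+1}$ have components indexed by $0,\dots,2s$. The Krawtchouk polynomials are, for integers $0\le j,k\le N$ and $0<p<1$, $K_j(k;p,N)={}_2F_1(-j,-k;-N;1/p)=\sum_{n=0}^{\min(j,k)}\frac{(-j)_n(-k)_n}{(-N)_n\,n!}p^{-n}$, where $(a)_n$ is the Pochhammer symbol; in particular $K_j(0;p,N)=1$. The Veronese sequence is defined by $(f_0)_j=\sqrt{\binom{2s}{j}}\,\xi_+^j$ for $0\le j\le 2s$, and recursively $f_{k+1}=\left(\mathbf{1}_{2s+1}-\frac{f_k f_k^\dagger}{f_k^\dagger f_k}\right)\partial f_k$ for $0\le k\le 2s-1$, where $\mathbf 1_{2s+1}$ is the identity matrix and $\dagger$ denotes conjugate transpose. *)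

(* Defs.v *)
From Stdlib Require Import Reals ClassicalEpsilon Arith.
Open Scope R_scope.

Record Cplx := mkC { re : R ; im : R }.

Definition Cadd (a b : Cplx) : Cplx := mkC (re a + re b) (im a + im b).
Definition Copp (a : Cplx) : Cplx := mkC (- re a) (- im a).
Definition Csub (a b : Cplx) : Cplx := Cadd a (Copp b).
Definition Cmul (a b : Cplx) : Cplx :=
  mkC (re a * re b - im a * im b) (re a * im b + im a * re b).
Definition Cconj (a : Cplx) : Cplx := mkC (re a) (- im a).
Definition Cnorm2 (a : Cplx) : R := re a * re a + im a * im a.
(* inverse; Cinv 0 = 0 by the convention of Rinv, irrelevant where used *)
Definition Cinv (a : Cplx) : Cplx := mkC (re a / Cnorm2 a) (- im a / Cnorm2 a).
Definition Cdiv (a b : Cplx) : Cplx := Cmul a (Cinv b).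
Definition RtoC (r : R) : Cplx := mkC r 0.
Definition Czero : Cplx := RtoC 0.
Definition Cone : Cplx := RtoC 1.
Definition Ci : Cplx := mkC 0 1.
Fixpoint Cpow (a : Cplx) (n : nat) : Cplx :=
  match n with O => Cone | S m => Cmul a (Cpow a m) end.

Fixpoint Csum (n : nat) (g : nat -> Cplx) : Cplx :=
  match n with O => Czero | S m => Cadd (Csum m g) (g m) end.

(* Vectors of C^{N+1}: components indexed by 0..N *)
Definition vec := nat -> Cplx.

Definition dotc (N : nat) (v w : vec) : Cplx :=
  Csum (S N) (fun j => Cmul (Cconj (v j)) (w j)).

Definition proj (N : nat) (v : vec) (i j : nat) : Cplx :=
  Cdiv (Cmul (v i) (Cconj (v j))) (dotc N v v).

(* Partial derivatives of a real function of two real variables (the value is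
   the derivative whenever it exists). *)
Definition Dx (h : R -> R -> R) (x y : R) : R :=
  epsilon (inhabits 0) (fun l => derivable_pt_lim (fun t => h t y) x l).
Definition Dy (h : R -> R -> R) (x y : R) : R :=
  epsilon (inhabits 0) (fun l => derivable_pt_lim (fun t => h x t) y l).

(* Wirtinger derivative  ∂ = (∂_{ξ^1} - i ∂_{ξ^2})/2, where ξ_+ = ξ^1 + i ξ^2.
   For g = u + i v:  ∂g = ((u_x + v_y) + i (v_x - u_y)) / 2. *)
Definition wirt (g : Cplx -> Cplx) (z : Cplx) : Cplx :=
  let u := fun a b => re (g (mkC a b)) in
  let v := fun a b => im (g (mkC a b)) in
  let x := re z in let y := im z in
  mkC ((Dx u x y + Dy v x y) / 2) ((Dx v x y - Dy u x y) / 2).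

(* Veronese sequence, as functions of ξ_+ ∈ C, with N = 2s. *)
Fixpoint veronese (N : nat) (k : nat) : Cplx -> vec :=
  match k with
  | O => fun xi j => Cmul (RtoC (sqrt (C N j))) (Cpow xi j)
  | S m =>
      let f := veronese N m in
      fun xi j =>
        Csub (wirt (fun z => f z j) xi)
             (Csum (S N) (fun l => Cmul (proj N (f xi) j l) (wirt (fun z => f z l) xi)))
  end.

Fixpoint poch (a : R) (n : nat) : R :=
  match n with O => 1 | S m => poch a m * (a + INR m) end.

Fixpoint Rsum (n : nat) (g : nat -> R) : R :=
  match n with O => 0 | S m => Rsum m g + g m end.

(* Krawtchouk polynomial K_j(k; p, N) = 2F1(-j,-k;-N;1/p) *)
Definition kraw (j k : nat) (p : R) (N : nat) : R :=
  Rsum (S (Nat.min j k)) (fun n =>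
    poch (- INR j) n * poch (- INR k) n / (poch (- INR N) n * INR (Factorial.fact n))
    * / (p ^ n)).

(* p = ξ_+ ξ_- / (1 + ξ_+ ξ_-) *)
Definition pval (xi : Cplx) : R := Cnorm2 xi / (1 + Cnorm2 xi).

(* Main.v *)
Require Import Defs.
From Stdlib Require Import Reals Arith.
From Stdlib Require Import Lia Lra Field FunctionalExtensionality ClassicalEpsilon.
Open Scope R_scope.

Lemma Ceq : forall a b : Cplx, re a = re b -> im a = im b -> a = b.
Proof. intros [a1 a2] [b1 b2]; simpl; intros; subst; reflexivity. Qed.

Lemma Cring_th : ring_theory Czero Cone Cadd Cmul Csub Copp (@eq Cplx).
Proof.
  constructor; intros; apply Ceq; unfold Cadd, Cmul, Csub, Copp, Czero, Cone, RtoC; simpl; ring.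
Qed.
Add Ring Cring : Cring_th.

Lemma Cinv_l : forall p, p <> Czero -> Cmul (Cinv p) p = Cone.
Proof.
  intros [x y] H. assert (Hn : x * x + y * y <> 0).
  { intro E. apply H. assert (x = 0) by nra. assert (y = 0) by nra. subst. reflexivity. }
  apply Ceq; unfold Cinv, Cnorm2, Cmul, Cone, RtoC; simpl; field; auto.
Qed.

Lemma Cfield_th : field_theory Czero Cone Cadd Cmul Csub Copp Cdiv Cinv (@eq Cplx).
Proof.
  constructor.
  - exact Cring_th.
  - intro E. injection E. lra.
  - reflexivity.
  - exact Cinv_l.
Qed.
Add Field Cfield : Cfield_th.

Lemma RtoC_add a b : RtoC (a + b) = Cadd (RtoC a) (RtoC b).
Proof. apply Ceq; simpl; ring. Qed.
Lemma RtoC_mul a b : RtoC (a * b) = Cmul (RtoC a) (RtoC b).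
Proof. apply Ceq; simpl; ring. Qed.
Lemma RtoC_sub a b : RtoC (a - b) = Csub (RtoC a) (RtoC b).
Proof. apply Ceq; simpl; ring. Qed.
Lemma RtoC_opp a : RtoC (- a) = Copp (RtoC a).
Proof. apply Ceq; simpl; ring. Qed.
Lemma RtoC_inv a : RtoC (/ a) = Cinv (RtoC a).
Proof.
  destruct (Req_dec a 0) as [->|H].
  - apply Ceq; unfold Cinv, Cnorm2; simpl; rewrite ?Rinv_0; unfold Rdiv; ring_simplify; try rewrite Rinv_0; ring.
  - apply Ceq; unfold Cinv, Cnorm2; simpl; field; auto.
Qed.
Lemma RtoC_div a b : RtoC (a / b) = Cdiv (RtoC a) (RtoC b).
Proof. unfold Rdiv, Cdiv. rewrite RtoC_mul, RtoC_inv. reflexivity. Qed.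
Lemma RtoC_pow a n : RtoC (a ^ n) = Cpow (RtoC a) n.
Proof. induction n; simpl. reflexivity. rewrite RtoC_mul, IHn; reflexivity. Qed.
Lemma RtoC_neq a : a <> 0 -> RtoC a <> Czero.
Proof. intros H E. injection E; auto. Qed.
Lemma RtoC_0 : RtoC 0 = Czero. Proof. reflexivity. Qed.
Lemma RtoC_1 : RtoC 1 = Cone. Proof. reflexivity. Qed.

Lemma Cpow_add a m n : Cpow a (m + n) = Cmul (Cpow a m) (Cpow a n).
Proof. induction m; simpl. ring. rewrite IHm; ring. Qed.
Lemma Cpow_mul a b n : Cpow (Cmul a b) n = Cmul (Cpow a n) (Cpow b n).
Proof. induction n; simpl. ring. rewrite IHn; ring. Qed.
Lemma Cconj_add a b : Cconj (Cadd a b) = Cadd (Cconj a) (Cconj b).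
Proof. apply Ceq; simpl; ring. Qed.
Lemma Cconj_mul a b : Cconj (Cmul a b) = Cmul (Cconj a) (Cconj b).
Proof. apply Ceq; simpl; ring. Qed.
Lemma Cconj_opp a : Cconj (Copp a) = Copp (Cconj a).
Proof. apply Ceq; simpl; ring. Qed.
Lemma Cconj_RtoC a : Cconj (RtoC a) = RtoC a.
Proof. apply Ceq; simpl; ring. Qed.
Lemma Cconj_pow a n : Cconj (Cpow a n) = Cpow (Cconj a) n.
Proof. induction n; simpl. apply Ceq; simpl; ring. rewrite Cconj_mul, IHn; reflexivity. Qed.
Lemma Cconj_conj a : Cconj (Cconj a) = a.
Proof. apply Ceq; simpl; ring. Qed.
Lemma Cmul_conj a : Cmul a (Cconj a) = RtoC (Cnorm2 a).
Proof. apply Ceq; unfold Cnorm2; simpl; ring. Qed.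
Lemma Cconj_0 : Cconj Czero = Czero. Proof. apply Ceq; simpl; ring. Qed.

Lemma Csum_ext n f g : (forall l, (l < n)%nat -> f l = g l) -> Csum n f = Csum n g.
Proof. induction n; intros H; simpl. reflexivity. rewrite IHn, H; auto. Qed.
Lemma Csum_scal n a f : Csum n (fun l => Cmul a (f l)) = Cmul a (Csum n f).
Proof. induction n; simpl. apply Ceq; simpl; ring. rewrite IHn; ring. Qed.
Lemma Csum_add n f g : Csum n (fun l => Cadd (f l) (g l)) = Cadd (Csum n f) (Csum n g).
Proof. induction n; simpl. apply Ceq; simpl; ring. rewrite IHn; ring. Qed.
Lemma Csum_zero n f : (forall l, (l < n)%nat -> f l = Czero) -> Csum n f = Czero.
Proof. induction n; intros H; simpl. reflexivity. rewrite IHn, H; auto. ring. Qed.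
Lemma Csum_conj n f : Cconj (Csum n f) = Csum n (fun l => Cconj (f l)).
Proof. induction n; simpl. apply Cconj_0. rewrite Cconj_add, IHn; reflexivity. Qed.
Lemma Csum_shift n f : Csum (S n) f = Cadd (f O) (Csum n (fun l => f (S l))).
Proof. induction n; simpl. ring. simpl in IHn. rewrite IHn. ring. Qed.

Lemma dpl_eq f g x l l' : (forall t, f t = g t) -> l = l' -> derivable_pt_lim f x l -> derivable_pt_lim g x l'.
Proof. intros H1 H2 H. replace g with f by (extensionality t; auto). subst; exact H. Qed.

Definition HasP (g : Cplx -> Cplx) (z gx gy : Cplx) : Prop :=
  derivable_pt_lim (fun t => re (g (mkC t (im z)))) (re z) (re gx) /\
  derivable_pt_lim (fun t => im (g (mkC t (im z)))) (re z) (im gx) /\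
  derivable_pt_lim (fun t => re (g (mkC (re z) t))) (im z) (re gy) /\
  derivable_pt_lim (fun t => im (g (mkC (re z) t))) (im z) (im gy).

Definition Wd (g : Cplx -> Cplx) (z d : Cplx) : Prop :=
  exists db, HasP g z (Cadd d db) (Cmul Ci (Csub d db)).

Lemma Dx_val (h : R -> R -> R) (x y l : R) : derivable_pt_lim (fun t => h t y) x l -> Defs.Dx h x y = l.
Proof.
  intro H. unfold Defs.Dx. apply (uniqueness_limite (fun t => h t y) x).
  apply epsilon_spec. exists l; exact H. exact H.
Qed.
Lemma Dy_val (h : R -> R -> R) (x y l : R) : derivable_pt_lim (fun t => h x t) y l -> Defs.Dy h x y = l.
Proof.
  intro H. unfold Defs.Dy. apply (uniqueness_limite (fun t => h x t) y).
  apply epsilon_spec. exists l; exact H. exact H.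
Qed.

Lemma wirt_val g z d : Wd g z d -> wirt g z = d.
Proof.
  intros [db [H1 [H2 [H3 H4]]]]. unfold wirt.
  rewrite (Dx_val (fun a b => re (g (mkC a b))) _ _ _ H1).
  rewrite (Dx_val (fun a b => im (g (mkC a b))) _ _ _ H2).
  rewrite (Dy_val (fun a b => re (g (mkC a b))) _ _ _ H3).
  rewrite (Dy_val (fun a b => im (g (mkC a b))) _ _ _ H4).
  apply Ceq; simpl; field.
Qed.

Lemma wirt_ext g h z : (forall w, g w = h w) -> wirt g z = wirt h z.
Proof. intro H. replace h with g by (extensionality w; auto). reflexivity. Qed.

Lemma Wd_ext g h z d d' : (forall w, g w = h w) -> d = d' -> Wd g z d -> Wd h z d'.
Proof. intros H1 H2 H. replace h with g by (extensionality w; auto). subst; exact H. Qed.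

Lemma Wd_const c z : Wd (fun _ => c) z Czero.
Proof.
  exists Czero. repeat split; simpl;
  (eapply dpl_eq; [intro t; reflexivity | | apply derivable_pt_lim_const]; ring).
Qed.

Lemma Wd_id z : Wd (fun w => w) z Cone.
Proof.
  exists Czero. repeat split; simpl.
  - eapply dpl_eq; [intro t; reflexivity | | apply derivable_pt_lim_id]; ring.
  - eapply dpl_eq; [intro t; reflexivity | | apply derivable_pt_lim_const]; ring.
  - eapply dpl_eq; [intro t; reflexivity | | apply derivable_pt_lim_const]; ring.
  - eapply dpl_eq; [intro t; reflexivity | | apply derivable_pt_lim_id]; ring.
Qed.

Lemma Wd_conj z : Wd Cconj z Czero.
Proof.
  exists Cone. repeat split; simpl.
  - eapply dpl_eq; [intro t; reflexivity | | apply derivable_pt_lim_id]; ring.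
  - eapply dpl_eq; [intro t; reflexivity | | apply derivable_pt_lim_const]; ring.
  - eapply dpl_eq; [intro t; reflexivity | | apply derivable_pt_lim_const]; ring.
  - eapply dpl_eq; [intro t; reflexivity | | apply derivable_pt_lim_opp; apply derivable_pt_lim_id]; ring.
Qed.

Lemma Wd_add g h z dg dh : Wd g z dg -> Wd h z dh -> Wd (fun w => Cadd (g w) (h w)) z (Cadd dg dh).
Proof.
  intros [bg [G1 [G2 [G3 G4]]]] [bh [H1 [H2 [H3 H4]]]].
  exists (Cadd bg bh). repeat split; simpl.
  - eapply dpl_eq; [intro t; reflexivity | | apply derivable_pt_lim_plus; [exact G1|exact H1]]; simpl; ring.
  - eapply dpl_eq; [intro t; reflexivity | | apply derivable_pt_lim_plus; [exact G2|exact H2]]; simpl; ring.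
  - eapply dpl_eq; [intro t; reflexivity | | apply derivable_pt_lim_plus; [exact G3|exact H3]]; simpl; ring.
  - eapply dpl_eq; [intro t; reflexivity | | apply derivable_pt_lim_plus; [exact G4|exact H4]]; simpl; ring.
Qed.

Lemma Wd_opp g z dg : Wd g z dg -> Wd (fun w => Copp (g w)) z (Copp dg).
Proof.
  intros [bg [G1 [G2 [G3 G4]]]].
  exists (Copp bg). repeat split; simpl.
  - eapply dpl_eq; [intro t; reflexivity | | apply derivable_pt_lim_opp; exact G1]; simpl; ring.
  - eapply dpl_eq; [intro t; reflexivity | | apply derivable_pt_lim_opp; exact G2]; simpl; ring.
  - eapply dpl_eq; [intro t; reflexivity | | apply derivable_pt_lim_opp; exact G3]; simpl; ring.
  - eapply dpl_eq; [intro t; reflexivity | | apply derivable_pt_lim_opp; exact G4]; simpl; ring.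
Qed.

Lemma Wd_mul g h z dg dh : Wd g z dg -> Wd h z dh ->
  Wd (fun w => Cmul (g w) (h w)) z (Cadd (Cmul dg (h z)) (Cmul (g z) dh)).
Proof.
  intros [bg [G1 [G2 [G3 G4]]]] [bh [H1 [H2 [H3 H4]]]].
  exists (Cadd (Cmul bg (h z)) (Cmul (g z) bh)).
  destruct z as [x y]; simpl in *.
  repeat split; simpl.
  - eapply dpl_eq; [intro t; reflexivity | |
      apply derivable_pt_lim_minus; apply derivable_pt_lim_mult; eassumption]; simpl; ring.
  - eapply dpl_eq; [intro t; reflexivity | |
      apply derivable_pt_lim_plus; apply derivable_pt_lim_mult; eassumption]; simpl; ring.
  - eapply dpl_eq; [intro t; reflexivity | |
      apply derivable_pt_lim_minus; apply derivable_pt_lim_mult; eassumption]; simpl; ring.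
  - eapply dpl_eq; [intro t; reflexivity | |
      apply derivable_pt_lim_plus; apply derivable_pt_lim_mult; eassumption]; simpl; ring.
Qed.

Lemma Wd_pow g z dg n : Wd g z dg ->
  Wd (fun w => Cpow (g w) n) z (Cmul (RtoC (INR n)) (Cmul (Cpow (g z) (n - 1)) dg)).
Proof.
  intro Hg. induction n.
  - apply (Wd_ext (fun _ => Cone) _ _ Czero); [intro w; reflexivity | | apply Wd_const]. apply Ceq; simpl; ring.
  - eapply Wd_ext; [ | | apply (Wd_mul _ _ _ _ _ Hg IHn)]; [intro w; reflexivity|].
    rewrite S_INR, RtoC_add.
    destruct n; simpl Cpow; rewrite ?Nat.sub_0_r.
    + simpl (INR 0). rewrite RtoC_0. simpl Cpow. rewrite RtoC_1. ring.
    + replace (S n - 1)%nat with n by lia. simpl Cpow. rewrite RtoC_1. ring.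
Qed.

Lemma dpl_inv_quad (a t0 : R) : 0 <= a ->
  derivable_pt_lim (fun t => / (1 + (t * t + a))) t0 (- (2 * t0) * (/ (1 + (t0 * t0 + a))) ^ 2).
Proof.
  intro Ha.
  assert (Hp : 1 + (t0 * t0 + a) <> 0) by nra.
  eapply dpl_eq; [ | |
    apply (derivable_pt_lim_div (fct_cte 1) (fun t => 1 + (t * t + a)) t0 0 (2 * t0))].
  - intro t. unfold fct_cte, div_fct. simpl. field. nra.
  - unfold fct_cte, Rsqr. field. auto.
  - apply derivable_pt_lim_const.
  - eapply dpl_eq; [ | | apply derivable_pt_lim_plus; [apply derivable_pt_lim_const|
       apply derivable_pt_lim_plus; [apply derivable_pt_lim_mult; apply derivable_pt_lim_id | apply derivable_pt_lim_const]]].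
    + intro t. unfold fct_cte, id, plus_fct, mult_fct. reflexivity.
    + unfold id. ring.
  - exact Hp.
Qed.

Definition hC (z : Cplx) : Cplx := RtoC (/ (1 + Cnorm2 z)).

Lemma Wd_hC z : Wd hC z (Cmul (Copp (Cconj z)) (Cpow (hC z) 2)).
Proof.
  exists (Cmul (Copp z) (Cpow (hC z) 2)).
  destruct z as [x y]; unfold hC, Cnorm2; split; [|split; [|split]]; simpl.
  - eapply dpl_eq; [ | | apply (dpl_inv_quad (y*y) x)]; [intro t; reflexivity | | nra]; ring.
  - eapply dpl_eq; [intro t; reflexivity | | apply derivable_pt_lim_const]; ring.
  - eapply dpl_eq; [ | | apply (dpl_inv_quad (x*x) y)]; [intro t; simpl; replace (x*x+t*t) with (t*t+x*x) by ring; reflexivity | | nra]; simpl; replace (y*y+x*x) with (x*x+y*y) by ring; ring.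
  - eapply dpl_eq; [intro t; reflexivity | | apply derivable_pt_lim_const]; ring.
Qed.

Lemma fact_pos n : 0 < INR (fact n).
Proof. apply lt_0_INR. apply lt_O_fact. Qed.

Lemma C_pos N j : (j <= N)%nat -> 0 < C N j.
Proof.
  intros. unfold C. pose proof (fact_pos N). pose proof (fact_pos j). pose proof (fact_pos (N-j)).
  apply Rdiv_lt_0_compat; auto. apply Rmult_lt_0_compat; auto.
Qed.

Lemma C_rec1 N i : (i <= N)%nat -> C (S N) (S i) * INR (S i) = C N i * INR (S N).
Proof.
  intros H. unfold C. replace (S N - S i)%nat with (N - i)%nat by lia.
  rewrite !fact_simpl, !mult_INR.
  pose proof (fact_pos N). pose proof (fact_pos i). pose proof (fact_pos (N-i)).
  field. repeat split; try lra. apply not_0_INR; lia.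
Qed.

Lemma C_rec2 N i : (i <= N)%nat -> C (S N) i * (INR (S N) - INR i) = C N i * INR (S N).
Proof.
  intros H. unfold C. replace (S N - i)%nat with (S (N - i))%nat by lia.
  rewrite !fact_simpl, !mult_INR.
  replace (INR (S N) - INR i) with (INR (S (N - i))) by (rewrite !S_INR, minus_INR by lia; ring).
  pose proof (fact_pos N). pose proof (fact_pos i). pose proof (fact_pos (N-i)).
  field. repeat split; try lra; apply not_0_INR; lia.
Qed.

Lemma C_nn n : C n n = 1.
Proof. unfold C. rewrite Nat.sub_diag. simpl. pose proof (fact_pos n). field. lra. Qed.

Definition delta0 : vec := fun j => match j with O => Cone | _ => Czero end.
Definition mulL (a b : Cplx) (c : vec) : vec := fun j =>
  Cadd (match j with O => Czero | S j' => Cmul a (c j') end) (Cmul b (c j)).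
Definition L1v (z : Cplx) := mulL z Cone.
Definition L2v (z : Cplx) := mulL Cone (Copp (Cconj z)).
Definition Pv (a b : nat) (z : Cplx) : vec := Nat.iter a (L1v z) (Nat.iter b (L2v z) delta0).
Definition Gv (N k : nat) (z : Cplx) : vec := Pv (N - k) k z.

Definition Ip (N : nat) (a b : vec) : Cplx :=
  Csum (S N) (fun l => Cmul (RtoC (/ C N l)) (Cmul (Cconj (a l)) (b l))).
Definition Dop (M : nat) (A1 A2 : Cplx) (c : vec) : vec := fun j =>
  Cadd (Cmul (Cconj A1) (Cmul (RtoC (INR (S j))) (c (S j))))
       (Cmul (Cconj A2) (Cmul (RtoC (INR M - INR j)) (c j))).

Lemma mulL_comm a b a' b' c : mulL a b (mulL a' b' c) = mulL a' b' (mulL a b c).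
Proof. extensionality j. unfold mulL. destruct j as [|[|j]]; ring. Qed.

Lemma iter_comm n a b a' b' c :
  Nat.iter n (mulL a b) (mulL a' b' c) = mulL a' b' (Nat.iter n (mulL a b) c).
Proof. induction n; simpl. reflexivity. rewrite IHn. apply mulL_comm. Qed.

Lemma mulL_scal a b s c : mulL a b (fun i => Cmul s (c i)) = fun j => Cmul s (mulL a b c j).
Proof. extensionality j. unfold mulL. destruct j; ring. Qed.

Lemma mulL_zero a b : mulL a b (fun _ => Czero) = fun _ => Czero.
Proof. extensionality j. unfold mulL. destruct j; ring. Qed.

Lemma mulL_support a b c n : (forall j, (n < j)%nat -> c j = Czero) ->
  forall j, (S n < j)%nat -> mulL a b c j = Czero.
Proof.
  intros H j Hj. unfold mulL. destruct j as [|j]. lia.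
  rewrite (H j) by lia. rewrite (H (S j)) by lia. ring.
Qed.

Lemma Pv_support a b z : forall j, (a + b < j)%nat -> Pv a b z j = Czero.
Proof.
  unfold Pv. induction a; simpl.
  - induction b; simpl; intros j Hj.
    + destruct j. lia. reflexivity.
    + apply (mulL_support _ _ _ b); [intros; apply IHb; lia | lia].
  - intros j Hj. apply (mulL_support _ _ _ (a + b)); [intros; apply IHa; lia | lia].
Qed.

Lemma Dop_leib M A1 A2 B1 B2 c j :
  Dop (S M) A1 A2 (mulL B1 B2 c) j =
  Cadd (Cmul (Cadd (Cmul (Cconj A1) B1) (Cmul (Cconj A2) B2)) (c j)) (mulL B1 B2 (Dop M A1 A2 c) j).
Proof.
  unfold Dop, mulL. destruct j as [|j].
  - rewrite !S_INR. simpl INR. rewrite !RtoC_sub, !RtoC_add, RtoC_0, RtoC_1. ring.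
  - rewrite !S_INR. rewrite !RtoC_sub, !RtoC_add, RtoC_1. ring.
Qed.

Lemma Dop_delta A1 A2 j : Dop 0 A1 A2 delta0 j = Czero.
Proof.
  unfold Dop, delta0. destruct j; simpl INR. rewrite Rminus_0_r, RtoC_0. ring. ring.
Qed.

Lemma Dop_ext M A1 A2 c d : (forall j, c j = d j) -> forall j, Dop M A1 A2 c j = Dop M A1 A2 d j.
Proof. intros H j. unfold Dop. rewrite !H. reflexivity. Qed.

Lemma nz (z : Cplx) : RtoC (1 + Cnorm2 z) = Cadd (Cmul (Cconj z) z) (Cmul (Cconj Cone) Cone).
Proof. apply Ceq; unfold Cnorm2; simpl; ring. Qed.

Lemma DL1_0 z b : forall j, Dop b z Cone (Pv 0 b z) j = Czero.
Proof.
  unfold Pv; simpl. induction b; intros j.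
  - apply Dop_delta.
  - simpl. unfold L2v at 1. rewrite Dop_leib.
    replace (Dop b z Cone (Nat.iter b (L2v z) delta0)) with (fun _ : nat => Czero)
      by (extensionality i; symmetry; apply IHb).
    rewrite mulL_zero. apply Ceq; simpl; ring.
Qed.

Lemma DL1 z a b : forall j, Dop (a + b) z Cone (Pv a b z) j =
  Cmul (RtoC (INR a * (1 + Cnorm2 z))) (Pv (a - 1) b z j).
Proof.
  induction a; intros j.
  - simpl. rewrite DL1_0. apply Ceq; simpl; ring.
  - simpl plus. unfold Pv; simpl Nat.iter. unfold L1v at 1. rewrite Dop_leib.
    fold (Pv a b z).
    replace (Dop (a + b) z Cone (Pv a b z)) with
      (fun i => Cmul (RtoC (INR a * (1 + Cnorm2 z))) (Pv (a - 1) b z i))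
      by (extensionality i; symmetry; apply IHa).
    rewrite mulL_scal. rewrite <- nz.
    destruct a.
    + simpl. rewrite Rmult_0_l, Rmult_1_l, RtoC_0. unfold Pv; simpl. ring.
    + replace (S (S a) - 1)%nat with (S a) by lia. replace (S a - 1)%nat with a by lia.
      unfold Pv. simpl Nat.iter. fold (L1v z).
      rewrite !S_INR, !RtoC_mul, !RtoC_add, !RtoC_1. ring.
Qed.

Lemma nz2 (z : Cplx) : RtoC (1 + Cnorm2 z) =
  Cadd (Cmul (Cconj Cone) Cone) (Cmul (Cconj (Copp (Cconj z))) (Copp (Cconj z))).
Proof. apply Ceq; unfold Cnorm2; simpl; ring. Qed.

Lemma DL2 z b : forall j, Dop b Cone (Copp (Cconj z)) (Pv 0 b z) j =
  Cmul (RtoC (INR b * (1 + Cnorm2 z))) (Pv 0 (b - 1) z j).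
Proof.
  unfold Pv; simpl. induction b; intros j.
  - rewrite Dop_delta. apply Ceq; simpl; ring.
  - simpl Nat.iter. unfold L2v at 1. rewrite Dop_leib.
    replace (Dop b Cone (Copp (Cconj z)) (Nat.iter b (L2v z) delta0)) with
      (fun i => Cmul (RtoC (INR b * (1 + Cnorm2 z))) (Nat.iter (b - 1) (L2v z) delta0 i))
      by (extensionality i; symmetry; apply IHb).
    rewrite mulL_scal. rewrite <- nz2.
    destruct b.
    + simpl. rewrite Rmult_0_l, Rmult_1_l, RtoC_0. ring.
    + replace (S (S b) - 1)%nat with (S b) by lia. replace (S b - 1)%nat with b by lia.
      simpl Nat.iter. fold (L2v z).
      rewrite !S_INR, !RtoC_mul, !RtoC_add, !RtoC_1. ring.
Qed.

Lemma invC1 N l : (l <= N)%nat -> / C (S N) (S l) = INR (S l) * / INR (S N) * / C N l.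
Proof.
  intro H. pose proof (C_rec1 N l H). pose proof (C_pos N l H). pose proof (C_pos (S N) (S l) ltac:(lia)).
  assert (0 < INR (S l)) by (apply lt_0_INR; lia). assert (0 < INR (S N)) by (apply lt_0_INR; lia).
  replace (C N l) with (C (S N) (S l) * INR (S l) / INR (S N)) by (rewrite H0; field; lra).
  field. lra.
Qed.

Lemma invC2 N l : (l <= N)%nat -> / C (S N) l = (INR (S N) - INR l) * / INR (S N) * / C N l.
Proof.
  intro H. pose proof (C_rec2 N l H). pose proof (C_pos N l H). pose proof (C_pos (S N) l ltac:(lia)).
  assert (0 < INR (S N)) by (apply lt_0_INR; lia).
  assert (INR l <= INR N) by (apply le_INR; lia). rewrite S_INR in *.
  replace (C N l) with (C (S N) l * (INR N + 1 - INR l) / (INR N + 1)) by (rewrite H0; field; lra).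
  field. lra.
Qed.

Lemma Ip_adj N al be a b : a (S N) = Czero ->
  Ip (S N) (mulL al be a) b = Cmul (RtoC (/ INR (S N))) (Ip N a (Dop (S N) al be b)).
Proof.
  intro Ha. unfold Ip.
  transitivity (Cadd
    (Csum (S (S N)) (fun l => Cmul (RtoC (/ C (S N) l)) (Cmul (Cconj (match l with O => Czero | S l' => Cmul al (a l') end)) (b l))))
    (Csum (S (S N)) (fun l => Cmul (RtoC (/ C (S N) l)) (Cmul (Cconj (Cmul be (a l))) (b l))))).
  { rewrite <- Csum_add. apply Csum_ext. intros l _. unfold mulL. rewrite Cconj_add. ring. }
  rewrite Csum_shift. change (Csum (S (S N)) ?f) with (Cadd (Csum (S N) f) (f (S N))).
  cbv beta. rewrite Ha. rewrite <- Csum_scal.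
  transitivity (Csum (S N) (fun l => Cadd
     (Cmul (RtoC (/ C (S N) (S l))) (Cmul (Cconj (Cmul al (a l))) (b (S l))))
     (Cmul (RtoC (/ C (S N) l)) (Cmul (Cconj (Cmul be (a l))) (b l))))).
  { rewrite Csum_add. rewrite Cconj_0. rewrite !Cconj_mul, Cconj_0. ring. }
  apply Csum_ext. intros l Hl. unfold Dop.
  rewrite invC1, invC2 by lia. rewrite !Cconj_mul.
  rewrite !RtoC_mul, !RtoC_sub. ring.
Qed.

Lemma Ip_sym N a b : Ip N b a = Cconj (Ip N a b).
Proof.
  unfold Ip. rewrite Csum_conj. apply Csum_ext. intros l _.
  rewrite !Cconj_mul, Cconj_RtoC, Cconj_conj. ring.
Qed.

Lemma Ip_scal_r N a s b : Ip N a (fun j => Cmul s (b j)) = Cmul s (Ip N a b).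
Proof.
  unfold Ip. rewrite <- Csum_scal. apply Csum_ext. intros; ring.
Qed.

Lemma Ip_ext N a b a' b' : (forall j, (j <= N)%nat -> a j = a' j) -> (forall j, (j <= N)%nat -> b j = b' j) ->
  Ip N a b = Ip N a' b'.
Proof. intros H1 H2. unfold Ip. apply Csum_ext. intros l Hl. rewrite H1, H2 by lia. reflexivity. Qed.

Lemma Gv_S N k z : (k <= N)%nat -> Gv (S N) k z = L1v z (Gv N k z).
Proof. intro H. unfold Gv. replace (S N - k)%nat with (S (N - k)) by lia. reflexivity. Qed.

Lemma Gv_SS N z : Gv (S N) (S N) z = L2v z (Gv N N z).
Proof. unfold Gv, Pv. rewrite !Nat.sub_diag. reflexivity. Qed.

Lemma Gv_supp N k z : (k <= N)%nat -> Gv N k z (S N) = Czero.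
Proof. intro H. unfold Gv. apply Pv_support. lia. Qed.

Lemma Dop_G1 N l z : (l <= S N)%nat -> forall j,
  Dop (S N) z Cone (Gv (S N) l z) j = Cmul (RtoC (INR (S N - l) * (1 + Cnorm2 z))) (Gv N l z j).
Proof.
  intros H j. unfold Gv. replace (S N) with (S N - l + l)%nat at 1 by lia.
  rewrite DL1. destruct (Nat.eq_dec l (S N)) as [->|Hl].
  - rewrite Nat.sub_diag. simpl. rewrite Rmult_0_l. apply Ceq; simpl; ring.
  - replace (S N - l - 1)%nat with (N - l)%nat by lia. reflexivity.
Qed.

Lemma Dop_G2 N z : forall j,
  Dop (S N) Cone (Copp (Cconj z)) (Gv (S N) (S N) z) j = Cmul (RtoC (INR (S N) * (1 + Cnorm2 z))) (Gv N N z j).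
Proof.
  intros j. unfold Gv. rewrite !Nat.sub_diag. rewrite DL2. simpl (S N - 1)%nat. rewrite Nat.sub_0_r. reflexivity.
Qed.

Lemma Orth z N : forall k l, (k <= N)%nat -> (l <= N)%nat ->
  Ip N (Gv N k z) (Gv N l z) = if Nat.eqb k l then RtoC ((1 + Cnorm2 z) ^ N / C N k) else Czero.
Proof.
  induction N; intros k l Hk Hl.
  - assert (k = 0%nat) by lia. assert (l = 0%nat) by lia. subst. simpl.
    unfold Ip, Gv, Pv. simpl. unfold C. simpl. apply Ceq; simpl; field.
  - assert (Hgen : forall k l, (k <= N)%nat -> (l <= S N)%nat ->
      Ip (S N) (Gv (S N) k z) (Gv (S N) l z) = if Nat.eqb k l then RtoC ((1 + Cnorm2 z) ^ S N / C (S N) k) else Czero).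
    { clear k l Hk Hl. intros k l Hk Hl.
      rewrite Gv_S by auto. unfold L1v. rewrite Ip_adj by (apply Gv_supp; auto).
      rewrite (Ip_ext N _ _ (Gv N k z) (fun j => Cmul (RtoC (INR (S N - l) * (1 + Cnorm2 z))) (Gv N l z j)));
        [| intros; reflexivity | intros; apply Dop_G1; auto].
      rewrite Ip_scal_r.
      destruct (Nat.eq_dec l (S N)) as [->|Hl'].
      - rewrite Nat.sub_diag. replace (Nat.eqb k (S N)) with false by (symmetry; apply Nat.eqb_neq; lia).
        simpl INR. rewrite Rmult_0_l, RtoC_0. ring.
      - rewrite IHN by lia. destruct (Nat.eqb_spec k l).
        + subst l. rewrite <- !RtoC_mul. f_equal.
          pose proof (C_rec2 N k Hk). pose proof (C_pos N k Hk). pose proof (C_pos (S N) k ltac:(lia)).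
          rewrite minus_INR by lia. simpl pow.
          assert (0 < INR (S N)) by (apply lt_0_INR; lia).
          assert (0 < 1 + Cnorm2 z) by (unfold Cnorm2; nra).
          replace (C (S N) k) with (C N k * INR (S N) / (INR (S N) - INR k)).
          2:{ rewrite <- H. field. assert (INR k <= INR N) by (apply le_INR; lia). rewrite S_INR in *. lra. }
          field. assert (INR k <= INR N) by (apply le_INR; lia). rewrite S_INR in *. repeat split; lra.
        + ring. }
    destruct (le_lt_dec k N) as [Hk'|Hk'].
    + apply Hgen; auto.
    + assert (k = S N) by lia. subst k.
      destruct (le_lt_dec l N) as [Hl'|Hl'].
      * rewrite Ip_sym, Hgen by auto. replace (Nat.eqb l (S N)) with false by (symmetry; apply Nat.eqb_neq; lia).
        replace (Nat.eqb (S N) l) with false by (symmetry; apply Nat.eqb_neq; lia). apply Cconj_0.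
      * assert (l = S N) by lia. subst l. rewrite Nat.eqb_refl.
        rewrite Gv_SS at 1. unfold L2v. rewrite Ip_adj by (apply Gv_supp; auto).
        rewrite (Ip_ext N _ _ (Gv N N z) (fun j => Cmul (RtoC (INR (S N) * (1 + Cnorm2 z))) (Gv N N z j)));
          [| intros; reflexivity | intros; apply Dop_G2].
        rewrite Ip_scal_r, IHN by lia. rewrite Nat.eqb_refl. rewrite <- !RtoC_mul. f_equal.
        rewrite !C_nn. simpl pow. assert (0 < INR (S N)) by (apply lt_0_INR; lia). field. lra.
Qed.

Lemma Wd_mulL (A B : Cplx -> Cplx) (c : Cplx -> vec) z0 dA dB (dc : vec) j :
  Wd A z0 dA -> Wd B z0 dB -> (forall i, Wd (fun z => c z i) z0 (dc i)) ->
  Wd (fun z => mulL (A z) (B z) (c z) j) z0 (Cadd (mulL dA dB (c z0) j) (mulL (A z0) (B z0) dc j)).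
Proof.
  intros HA HB Hc. unfold mulL. destruct j as [|j].
  - pose proof (Wd_add _ _ _ _ _ (Wd_const Czero z0) (Wd_mul B (fun z => c z 0%nat) _ _ _ HB (Hc 0%nat))) as H.
    eapply Wd_ext; [ | | exact H]; [intro w; reflexivity|]. cbv beta iota; ring.
  - pose proof (Wd_add _ _ _ _ _ (Wd_mul A (fun z => c z j) _ _ _ HA (Hc j)) (Wd_mul B (fun z => c z (S j)) _ _ _ HB (Hc (S j)))) as H.
    eapply Wd_ext; [ | | exact H]; [intro w; reflexivity|]. cbv beta iota; ring.
Qed.

Lemma Wd_P0 b z0 : forall j, Wd (fun z => Pv 0 b z j) z0 Czero.
Proof.
  unfold Pv; simpl. induction b; intro j; simpl.
  - apply Wd_const.
  - unfold L2v. pose proof (Wd_mulL (fun _ => Cone) (fun z => Copp (Cconj z)) (fun z => Nat.iter b (L2v z) delta0) z0 Czero (Copp Czero) (fun _ => Czero) j (Wd_const _ _) (Wd_opp _ _ _ (Wd_conj z0)) IHb) as H.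
    eapply Wd_ext; [ | | exact H]; [intro w; reflexivity|].
    rewrite mulL_zero. unfold mulL. destruct j; ring.
Qed.

Lemma Wd_P a b z0 : forall j,
  Wd (fun z => Pv a b z j) z0 (Cmul (RtoC (INR a)) (mulL Cone Czero (Pv (a - 1) b z0) j)).
Proof.
  induction a; intro j.
  - eapply Wd_ext; [ | | apply Wd_P0]; [intro; reflexivity|]. simpl. rewrite RtoC_0. ring.
  - unfold Pv; simpl Nat.iter. unfold L1v.
    pose proof (Wd_mulL (fun z => z) (fun _ => Cone) (fun z => Pv a b z) z0 Cone Czero _ j (Wd_id z0) (Wd_const _ _) IHa) as H.
    eapply Wd_ext; [ | | exact H]; [intro w; reflexivity|].
    rewrite mulL_scal.
    fold (Pv a b z0).
    destruct a.
    + simpl. rewrite RtoC_0. unfold mulL. destruct j; rewrite ?RtoC_1; ring.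
    + replace (S (S a) - 1)%nat with (S a) by lia. replace (S a - 1)%nat with a by lia.
      rewrite (mulL_comm z0 Cone Cone Czero).
      change (mulL z0 Cone (Pv a b z0)) with (Pv (S a) b z0).
      rewrite !S_INR, !RtoC_add, RtoC_1. rewrite ?Nat.sub_0_r. change (Nat.iter (S a) (mulL z0 Cone) (Nat.iter b (L2v z0) delta0)) with (Pv (S a) b z0). ring.
Qed.

Definition ck (N k : nat) : R := INR (fact N) / INR (fact (N - k)).
Definition Fv (N k : nat) (z : Cplx) : vec := fun j =>
  Cmul (RtoC (ck N k / sqrt (C N j))) (Cmul (Cpow (hC z) k) (Gv N k z j)).
Definition dF (N k : nat) (z : Cplx) : vec := fun j =>
  Cmul (RtoC (ck N k / sqrt (C N j)))
   (Cadd (Cmul (Cmul (RtoC (INR k)) (Cmul (Cpow (hC z) (k - 1)) (Cmul (Copp (Cconj z)) (Cpow (hC z) 2)))) (Gv N k z j))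
         (Cmul (Cpow (hC z) k) (Cmul (RtoC (INR (N - k))) (mulL Cone Czero (Pv (N - k - 1) k z) j)))).

Lemma Wd_F N k z0 j : Wd (fun z => Fv N k z j) z0 (dF N k z0 j).
Proof.
  pose proof (Wd_mul _ _ _ _ _ (Wd_pow _ _ _ k (Wd_hC z0)) (Wd_P (N - k) k z0 j)) as H1.
  pose proof (Wd_mul _ _ _ _ _ (Wd_const (RtoC (ck N k / sqrt (C N j))) z0) H1) as H2.
  eapply Wd_ext; [ | | exact H2]; [intro w; reflexivity|].
  unfold dF, Gv. ring.
Qed.

Definition betaF (N k : nat) (z : Cplx) : Cplx :=
  Cmul (RtoC (INR (N - k) - INR k)) (Cmul (Cconj z) (hC z)).

Lemma hC_rel z : Cmul (hC z) (Cadd Cone (Cmul z (Cconj z))) = Cone.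
Proof.
  unfold hC. rewrite Cmul_conj, <- RtoC_1, <- RtoC_add, <- RtoC_mul. f_equal.
  assert (0 <= Cnorm2 z) by (unfold Cnorm2; nra). field. lra.
Qed.

Lemma ring_fac (X Y T H K : Cplx) : Cmul H K = Cone -> X = Cadd Y (Cmul T (Csub Cone (Cmul H K))) -> X = Y.
Proof. intros E1 E2. rewrite E2, E1. ring. Qed.

Lemma ck_S N k : (S k <= N)%nat -> ck N (S k) = ck N k * INR (N - k).
Proof.
  intro H. unfold ck. replace (N - k)%nat with (S (N - S k)) by lia.
  rewrite fact_simpl, mult_INR. pose proof (fact_pos (N - S k)).
  assert (0 < INR (S (N - S k))) by (apply lt_0_INR; lia). field. lra.
Qed.

Lemma F_rec N k z j : (S k <= N)%nat ->
  Csub (dF N k z j) (Fv N (S k) z j) = Cmul (betaF N k z) (Fv N k z j).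
Proof.
  intro Hk. unfold dF, Fv, betaF.
  assert (EG1 : Gv N k z = L1v z (Pv (N - k - 1) k z)).
  { unfold Gv. replace (N - k)%nat with (S (N - k - 1)) at 1 by lia. reflexivity. }
  assert (EG2 : Gv N (S k) z = L2v z (Pv (N - k - 1) k z)).
  { unfold Gv, Pv. simpl Nat.iter. replace (N - S k)%nat with (N - k - 1)%nat by lia.
    unfold L2v at 1. apply iter_comm. }
  rewrite EG1, EG2, ck_S by auto.
  set (Q := Pv (N - k - 1) k z).
  set (c := ck N k / sqrt (C N j)).
  replace (ck N k * INR (N - k) / sqrt (C N j)) with (c * INR (N - k)) by (unfold c, Rdiv; ring).
  rewrite !RtoC_mul, !RtoC_sub.
  set (m := RtoC (INR (N - k))).
  unfold L1v, L2v, mulL.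
  destruct k as [|k'].
  - simpl Cpow. simpl INR. rewrite RtoC_0.
    destruct j as [|j].
    + ring.
    + apply (ring_fac _ _ (Cmul (RtoC c) (Cmul m (Q j))) (hC z) (Cadd Cone (Cmul z (Cconj z))) (hC_rel z)).
      ring.
  - replace (S k' - 1)%nat with k' by lia. simpl Cpow. rewrite S_INR, RtoC_add, RtoC_1.
    destruct j as [|j].
    + ring.
    + apply (ring_fac _ _ (Cmul (RtoC c) (Cmul (Cmul (hC z) (Cpow (hC z) k')) (Cmul m (Q j)))) (hC z) (Cadd Cone (Cmul z (Cconj z))) (hC_rel z)).
      ring.
Qed.

Lemma sqrtC_sq N l : (l <= N)%nat -> sqrt (C N l) * sqrt (C N l) = C N l.
Proof. intro H. apply sqrt_sqrt. left. apply C_pos; auto. Qed.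

Lemma sqrtC_pos N l : (l <= N)%nat -> 0 < sqrt (C N l).
Proof. intro H. apply sqrt_lt_R0. apply C_pos; auto. Qed.

Lemma hC_conj z n : Cconj (Cpow (hC z) n) = Cpow (hC z) n.
Proof. rewrite Cconj_pow. unfold hC. rewrite Cconj_RtoC. reflexivity. Qed.

Lemma dotc_F N k k' z :
  dotc N (Fv N k z) (Fv N k' z) =
  Cmul (RtoC (ck N k * ck N k')) (Cmul (Cmul (Cpow (hC z) k) (Cpow (hC z) k')) (Ip N (Gv N k z) (Gv N k' z))).
Proof.
  unfold dotc, Ip. rewrite <- !Csum_scal. apply Csum_ext. intros l Hl.
  unfold Fv. rewrite !Cconj_mul, Cconj_RtoC, hC_conj.
  assert (E : RtoC (ck N k / sqrt (C N l)) = Cmul (RtoC (ck N k)) (RtoC (/ sqrt (C N l)))) by (rewrite <- RtoC_mul; reflexivity).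
  assert (E' : RtoC (ck N k' / sqrt (C N l)) = Cmul (RtoC (ck N k')) (RtoC (/ sqrt (C N l)))) by (rewrite <- RtoC_mul; reflexivity).
  rewrite E, E'.
  assert (E2 : RtoC (/ C N l) = Cmul (RtoC (/ sqrt (C N l))) (RtoC (/ sqrt (C N l)))).
  { rewrite <- RtoC_mul. f_equal. rewrite <- Rinv_mult, sqrtC_sq by lia. reflexivity. }
  rewrite E2, RtoC_mul. ring.
Qed.

Definition Dn (N k : nat) (z : Cplx) : R :=
  ck N k * ck N k * (/ (1 + Cnorm2 z)) ^ k * (/ (1 + Cnorm2 z)) ^ k * ((1 + Cnorm2 z) ^ N / C N k).

Lemma Dn_pos N k z : (k <= N)%nat -> 0 < Dn N k z.
Proof.
  intro H. unfold Dn, ck. assert (0 < 1 + Cnorm2 z) by (unfold Cnorm2; nra).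
  pose proof (fact_pos N). pose proof (fact_pos (N - k)). pose proof (C_pos N k H).
  assert (0 < INR (fact N) / INR (fact (N - k))) by (apply Rdiv_lt_0_compat; auto).
  assert (0 < / (1 + Cnorm2 z)) by (apply Rinv_0_lt_compat; auto).
  assert (0 < (/ (1 + Cnorm2 z)) ^ k) by (apply pow_lt; auto).
  assert (0 < (1 + Cnorm2 z) ^ N / C N k) by (apply Rdiv_lt_0_compat; auto; apply pow_lt; auto).
  repeat apply Rmult_lt_0_compat; try assumption; try (apply Rinv_0_lt_compat; assumption); apply pow_lt; assumption.
Qed.

Lemma dotc_FF N k z : (k <= N)%nat -> dotc N (Fv N k z) (Fv N k z) = RtoC (Dn N k z).
Proof.
  intro H. rewrite dotc_F, Orth by auto. rewrite Nat.eqb_refl.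
  unfold Dn, hC. rewrite <- !RtoC_pow, <- !RtoC_mul. f_equal. ring.
Qed.

Lemma dotc_F1 N k z : (S k <= N)%nat -> dotc N (Fv N k z) (Fv N (S k) z) = Czero.
Proof.
  intro H. rewrite dotc_F, Orth by lia.
  replace (Nat.eqb k (S k)) with false by (symmetry; apply Nat.eqb_neq; lia). ring.
Qed.

Lemma dotc_lin N v w1 w2 b :
  dotc N v (fun j => Cadd (w1 j) (Cmul b (w2 j))) = Cadd (dotc N v w1) (Cmul b (dotc N v w2)).
Proof.
  unfold dotc. rewrite <- Csum_scal, <- Csum_add. apply Csum_ext. intros; ring.
Qed.

Lemma dotc_ext N v w v' w' : (forall j, (j <= N)%nat -> v j = v' j) -> (forall j, (j <= N)%nat -> w j = w' j) ->
  dotc N v w = dotc N v' w'.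
Proof. intros H1 H2. unfold dotc. apply Csum_ext. intros l Hl. rewrite H1, H2 by lia. reflexivity. Qed.

Lemma C_n_0 n : C n 0 = 1.
Proof. unfold C. rewrite Nat.sub_0_r. simpl. pose proof (fact_pos n). field. lra. Qed.

Lemma Pv_base z : forall N j, (j <= N)%nat -> Pv N 0 z j = Cmul (RtoC (C N j)) (Cpow z j).
Proof.
  induction N; intros j Hj.
  - assert (j = 0%nat) by lia. subst. unfold C; simpl. apply Ceq; simpl; field.
  - unfold Pv; simpl Nat.iter. change (Nat.iter N (L1v z) delta0) with (Pv N 0 z). unfold L1v, mulL. destruct j as [|j].
    + rewrite IHN by lia. rewrite !C_n_0. simpl. ring.
    + destruct (Nat.eq_dec j N) as [->|Hne].
      * rewrite IHN by lia. rewrite (Pv_support N 0 z (S N)) by lia. rewrite !C_nn. simpl Cpow. ring.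
      * rewrite !IHN by lia. rewrite <- pascal by lia. rewrite RtoC_add. simpl Cpow. ring.
Qed.

Lemma veronese_F N : forall k, (k <= N)%nat -> forall z j, (j <= N)%nat -> veronese N k z j = Fv N k z j.
Proof.
  induction k; intros Hk z j Hj.
  - simpl. unfold Fv, Gv, ck. rewrite Nat.sub_0_r. simpl Cpow.
    rewrite Pv_base by auto. unfold Rdiv. rewrite Rinv_r by (apply INR_fact_neq_0).
    assert (HS := sqrtC_pos N j Hj).
    assert (E : RtoC (C N j) = Cmul (RtoC (sqrt (C N j))) (RtoC (sqrt (C N j))))
      by (rewrite <- RtoC_mul, sqrtC_sq; auto).
    rewrite E, Rmult_1_l, RtoC_inv. field. apply RtoC_neq. lra.
  - change (veronese N (S k) z j) with
      (Csub (wirt (fun z => veronese N k z j) z)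
        (Csum (S N) (fun l => Cmul (proj N (veronese N k z) j l) (wirt (fun z => veronese N k z l) z)))).
    assert (IH := IHk ltac:(lia)).
    assert (Hw : forall l, (l <= N)%nat -> wirt (fun z => veronese N k z l) z = dF N k z l).
    { intros l Hl. rewrite (wirt_ext _ (fun z => Fv N k z l)) by (intro; apply IH; auto).
      apply wirt_val, Wd_F. }
    rewrite Hw by auto.
    rewrite (Csum_ext _ _ (fun l => Cmul (Cmul (Fv N k z j) (Cinv (RtoC (Dn N k z))))
                                       (Cmul (Cconj (Fv N k z l)) (dF N k z l)))).
    2:{ intros l Hl. rewrite Hw by lia. unfold proj.
        rewrite (dotc_ext N _ _ (Fv N k z) (Fv N k z)) by (intros; apply IH; auto).
        rewrite dotc_FF by lia. rewrite !IH by lia. unfold Cdiv. ring. }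
    rewrite Csum_scal. fold (dotc N (Fv N k z) (dF N k z)).
    rewrite (dotc_ext N _ _ (Fv N k z) (fun j => Cadd (Fv N (S k) z j) (Cmul (betaF N k z) (Fv N k z j))))
      by (intros i Hi; first [reflexivity | rewrite <- (F_rec N k z i) by auto; ring]).
    rewrite dotc_lin, dotc_F1, dotc_FF by lia.
    assert (HD : RtoC (Dn N k z) <> Czero) by (apply RtoC_neq; apply Rgt_not_eq, Dn_pos; lia).
    pose proof (F_rec N k z j ltac:(auto)) as FR.
    transitivity (Csub (dF N k z j) (Cmul (betaF N k z) (Fv N k z j))).
    + field. auto.
    + rewrite <- FR. ring.
Qed.

Lemma Rsum_ext n f g : (forall l, (l < n)%nat -> f l = g l) -> Rsum n f = Rsum n g.
Proof. induction n; intros H; simpl. reflexivity. rewrite IHn, H; auto. Qed.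
Lemma Rsum_scal n a f : Rsum n (fun l => a * f l) = a * Rsum n f.
Proof. induction n; simpl. ring. rewrite IHn; ring. Qed.
Lemma Rsum_add n f g : Rsum n (fun l => f l + g l) = Rsum n f + Rsum n g.
Proof. induction n; simpl. ring. rewrite IHn; ring. Qed.
Lemma Rsum_extend m d f : (forall n, (m <= n < m + d)%nat -> f n = 0) -> Rsum m f = Rsum (m + d) f.
Proof.
  induction d; intros H. rewrite Nat.add_0_r; reflexivity.
  rewrite Nat.add_succ_r. simpl. rewrite <- IHd by (intros; apply H; lia). rewrite (H (m + d)%nat) by lia. ring.
Qed.
Lemma Rsum_sum_f n f : Rsum (S n) f = sum_f_R0 f n.
Proof. induction n. simpl. ring. change (Rsum (S (S n)) f) with (Rsum (S n) f + f (S n)). rewrite IHn. reflexivity. Qed.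

Lemma poch_le a n : (n <= a)%nat -> poch (- INR a) n = (-1) ^ n * INR (fact a) / INR (fact (a - n)).
Proof.
  induction n; intro H.
  - simpl. rewrite Nat.sub_0_r. pose proof (fact_pos a). field. lra.
  - simpl poch. rewrite IHn by lia.
    replace (a - n)%nat with (S (a - S n)) by lia. rewrite fact_simpl, mult_INR.
    replace (INR (S (a - S n))) with (INR a - INR n) by (rewrite S_INR, minus_INR by lia; rewrite S_INR; ring).
    pose proof (fact_pos (a - S n)). assert (INR n < INR a) by (apply lt_INR; lia).
    simpl pow. field. lra.
Qed.

Lemma poch_gt a n : (a < n)%nat -> poch (- INR a) n = 0.
Proof.
  induction n; intro H. lia.
  simpl poch. destruct (Nat.eq_dec n a) as [->|Hne]. ring.
  rewrite IHn by lia. ring.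
Qed.

Definition Tt (N k j : nat) (r : R) (n : nat) : R :=
  if Nat.leb n j then (-1) ^ n * C k n * C (N - n) (j - n) * r ^ n else 0.

Lemma KT N k j p : (j <= N)%nat -> (k <= N)%nat -> p <> 0 ->
  C N j * kraw j k p N = Rsum (S k) (Tt N k j (/ p)).
Proof.
  intros Hj Hk Hp. unfold kraw.
  set (term := fun n : nat => poch (- INR j) n * poch (- INR k) n / (poch (- INR N) n * INR (fact n)) * / p ^ n).
  assert (Hext : Rsum (S (Nat.min j k)) term = Rsum (S k) term).
  { replace (S k) with (S (Nat.min j k) + (k - Nat.min j k))%nat by lia.
    apply Rsum_extend. intros n Hn. unfold term. rewrite (poch_gt j n) by lia. unfold Rdiv; ring. }
  rewrite Hext, <- Rsum_scal. apply Rsum_ext. intros n Hn. unfold term, Tt.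
  destruct (Nat.leb_spec n j) as [Hnj|Hnj].
  - rewrite !poch_le by lia. rewrite pow_inv.
    unfold C. replace (N - n - (j - n))%nat with (N - j)%nat by lia.
    pose proof (fact_pos N). pose proof (fact_pos j). pose proof (fact_pos k). pose proof (fact_pos n).
    pose proof (fact_pos (N - n)). pose proof (fact_pos (j - n)). pose proof (fact_pos (k - n)).
    pose proof (fact_pos (N - j)).
    assert ((-1) ^ n <> 0) by (apply pow_nonzero; lra).
    assert (p ^ n <> 0) by (apply pow_nonzero; auto).
    field. repeat split; lra.
  - rewrite (poch_gt j n) by lia. unfold Rdiv; ring.
Qed.

Lemma Tt_a N k j r n : (j < N)%nat -> Tt (S N) k (S j) r n = Tt N k (S j) r n + Tt N k j r n.
Proof.
  intro Hj. unfold Tt.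
  destruct (Nat.leb_spec n (S j)); destruct (Nat.leb_spec n j); try lia.
  - replace (S N - n)%nat with (S (N - n)) by lia. replace (S j - n)%nat with (S (j - n)) by lia.
    rewrite <- pascal by lia. ring.
  - assert (n = S j) by lia. subst n. rewrite !Nat.sub_diag. rewrite !C_n_0. ring.
  - ring.
Qed.

Lemma Tt_b N k r n : Tt (S N) k 0 r n = Tt N k 0 r n.
Proof.
  unfold Tt. destruct (Nat.leb_spec n 0). assert (n = 0%nat) by lia. subst. rewrite !C_n_0. ring. ring.
Qed.

Lemma Tt_c N k r n : (n <= k)%nat -> (k <= N)%nat -> Tt (S N) k (S N) r n = Tt N k N r n.
Proof.
  intros H1 H2. unfold Tt. destruct (Nat.leb_spec n (S N)); destruct (Nat.leb_spec n N); try lia.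
  rewrite !C_nn. ring.
Qed.

Lemma CC N n j : (n <= j)%nat -> (j <= N)%nat -> C N n * C (N - n) (j - n) = C N j * C j n.
Proof.
  intros H1 H2. unfold C. replace (N - n - (j - n))%nat with (N - j)%nat by lia.
  pose proof (fact_pos N). pose proof (fact_pos j). pose proof (fact_pos n).
  pose proof (fact_pos (N - n)). pose proof (fact_pos (j - n)). pose proof (fact_pos (N - j)).
  field. repeat split; lra.
Qed.

Lemma Tt_closed N j r : (j <= N)%nat -> Rsum (S N) (Tt N N j r) = C N j * (1 - r) ^ j.
Proof.
  intro Hj. replace (S N) with (S j + (N - j))%nat by lia. rewrite <- Rsum_extend.
  2:{ intros n Hn. unfold Tt. destruct (Nat.leb_spec n j); [lia | reflexivity]. }
  replace (1 - r) with (- r + 1) by ring. rewrite binomial, <- Rsum_sum_f, <- Rsum_scal.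
  apply Rsum_ext. intros n Hn. unfold Tt. destruct (Nat.leb_spec n j); [|lia].
  replace ((-1) ^ n * C N n * C (N - n) (j - n) * r ^ n) with ((-1) ^ n * (C N n * C (N - n) (j - n)) * r ^ n) by ring.
  rewrite CC by lia. rewrite pow1. replace (- r) with (-1 * r) by ring. rewrite Rpow_mult_distr. ring.
Qed.

Lemma Pv_L2base z : forall N j, (j <= N)%nat ->
  Pv 0 N z j = Cmul (RtoC (C N j)) (Cpow (Copp (Cconj z)) (N - j)).
Proof.
  induction N; intros j Hj.
  - assert (j = 0%nat) by lia. subst. unfold C; simpl. apply Ceq; simpl; field.
  - unfold Pv; simpl Nat.iter. change (Nat.iter N (L2v z) delta0) with (Pv 0 N z). unfold L2v, mulL. destruct j as [|j].
    + rewrite IHN by lia. rewrite !C_n_0, !Nat.sub_0_r. simpl Cpow. ring.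
    + destruct (Nat.eq_dec j N) as [->|Hne].
      * rewrite IHN by lia. rewrite (Pv_support 0 N z (S N)) by lia. rewrite !C_nn, !Nat.sub_diag. simpl Cpow. ring.
      * rewrite !IHN by lia. rewrite <- pascal by lia. rewrite RtoC_add.
        replace (S N - S j)%nat with (S (N - S j)) by lia. replace (N - j)%nat with (S (N - S j)) by lia.
        simpl Cpow. ring.
Qed.

Definition Hv (N k j : nat) (z : Cplx) : Cplx :=
  Cmul (Cpow (Copp (Cconj z)) k) (Cmul (Cpow z j) (RtoC (Rsum (S k) (Tt N k j (/ pval z))))).

Lemma Cpow_one n : Cpow Cone n = Cone.
Proof. induction n; simpl. reflexivity. rewrite IHn. ring. Qed.

Lemma norm_pos z : z <> Czero -> 0 < Cnorm2 z.
Proof.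
  intro H. destruct z as [x y]. unfold Cnorm2; simpl.
  destruct (Req_dec x 0); destruct (Req_dec y 0); try nra. subst. exfalso; apply H; reflexivity.
Qed.

Lemma key1 z : z <> Czero -> Cmul (Copp (Cconj z)) (Cmul z (RtoC (1 - / pval z))) = Cone.
Proof.
  intro H. pose proof (norm_pos z H).
  transitivity (Cmul (RtoC (- Cnorm2 z)) (RtoC (1 - / pval z))).
  { rewrite RtoC_opp, <- Cmul_conj. ring. }
  rewrite <- RtoC_mul, <- RtoC_1. f_equal. unfold pval. field. lra.
Qed.

Lemma GH_closed z N j : z <> Czero -> (j <= N)%nat -> Gv N N z j = Hv N N j z.
Proof.
  intros Hz Hj. unfold Gv. rewrite Nat.sub_diag, Pv_L2base by auto.
  unfold Hv. rewrite Tt_closed by auto. rewrite RtoC_mul, RtoC_pow.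
  assert (EN : Cpow (Copp (Cconj z)) N = Cmul (Cpow (Copp (Cconj z)) (N - j)) (Cpow (Copp (Cconj z)) j))
    by (rewrite <- Cpow_add; f_equal; lia).
  rewrite EN.
  transitivity (Cmul (Cmul (RtoC (C N j)) (Cpow (Copp (Cconj z)) (N - j)))
    (Cpow (Cmul (Copp (Cconj z)) (Cmul z (RtoC (1 - / pval z)))) j)).
  { rewrite key1, Cpow_one by auto. ring. }
  rewrite !Cpow_mul. ring.
Qed.

Lemma GH z : z <> Czero -> forall N k j, (k <= N)%nat -> (j <= N)%nat -> Gv N k z j = Hv N k j z.
Proof.
  intro Hz. induction N; intros k j Hk Hj.
  - assert (k = 0%nat) by lia. subst. apply GH_closed; auto.
  - destruct (Nat.eq_dec k (S N)) as [->|Hk'].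
    + apply GH_closed; auto.
    + rewrite Gv_S by lia. unfold L1v, mulL. unfold Hv. destruct j as [|j].
      * rewrite IHN by lia. unfold Hv.
        rewrite (Rsum_ext _ (Tt (S N) k 0 (/ pval z)) (Tt N k 0 (/ pval z))) by (intros; apply Tt_b). ring.
      * destruct (Nat.eq_dec j N) as [->|Hne].
        -- rewrite IHN by lia. rewrite Gv_supp by lia. unfold Hv.
           rewrite (Rsum_ext _ (Tt (S N) k (S N) (/ pval z)) (Tt N k N (/ pval z))) by (intros; apply Tt_c; lia).
           simpl Cpow. ring.
        -- rewrite !IHN by lia. unfold Hv.
           rewrite (Rsum_ext _ (Tt (S N) k (S j) (/ pval z)) (fun n => Tt N k (S j) (/ pval z) n + Tt N k j (/ pval z) n))
             by (intros; apply Tt_a; lia).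
           rewrite Rsum_add, RtoC_add. simpl Cpow. ring.
Qed.

Lemma pval_nz z : z <> Czero -> pval z <> 0.
Proof. intro H. pose proof (norm_pos z H). unfold pval. apply Rgt_not_eq. apply Rdiv_lt_0_compat; lra. Qed.

Lemma Gv_kraw N k j z : z <> Czero -> (k <= N)%nat -> (j <= N)%nat ->
  Gv N k z j = Cmul (Cpow (Copp (Cconj z)) k) (Cmul (Cpow z j) (RtoC (C N j * kraw j k (pval z) N))).
Proof.
  intros Hz Hk Hj. rewrite GH by auto. unfold Hv. rewrite KT by (auto; apply pval_nz; auto). reflexivity.
Qed.

Lemma one_plus z : Cadd Cone (Cmul z (Cconj z)) = RtoC (1 + Cnorm2 z).
Proof. rewrite Cmul_conj, RtoC_add. reflexivity. Qed.

Lemma proj_ext N v v' i j : (forall l, (l <= N)%nat -> v l = v' l) -> (i <= N)%nat -> (j <= N)%nat ->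
  proj N v i j = proj N v' i j.
Proof.
  intros H Hi Hj. unfold proj. rewrite (dotc_ext N v v v' v') by auto. rewrite !H by auto. reflexivity.
Qed.

Theorem theorem3p1 (N : nat) (HN : (0 < N)%nat) :
  forall (k j : nat) (xi : Cplx), (k <= N)%nat -> (j <= N)%nat -> xi <> Czero ->
    veronese N k xi j =
      Cmul (RtoC (INR (fact N) / INR (fact (N - k))))
        (Cmul (Cpow (Cdiv (Copp (Cconj xi)) (Cadd Cone (Cmul xi (Cconj xi)))) k)
          (Cmul (RtoC (sqrt (C N j)))
            (Cmul (Cpow xi j) (RtoC (kraw j k (pval xi) N)))))
  /\ forall i : nat, (i <= N)%nat ->
    proj N (veronese N k xi) i j =
      Cmul (RtoC (C N k))
        (Cmul (Cdiv (Cpow (Cmul xi (Cconj xi)) k) (Cpow (Cadd Cone (Cmul xi (Cconj xi))) N))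
          (Cmul (Cmul (Cpow xi i) (Cpow (Cconj xi) j))
            (Cmul (RtoC (sqrt (C N i * C N j)))
              (RtoC (kraw i k (pval xi) N * kraw j k (pval xi) N))))).
Proof.
  intros k j z Hk Hj Hz.
  pose proof (norm_pos z Hz) as Hu.
  assert (HU : RtoC (1 + Cnorm2 z) <> Czero) by (apply RtoC_neq; lra).
  assert (Hck : RtoC (ck N k) <> Czero).
  { apply RtoC_neq. unfold ck. pose proof (fact_pos N). pose proof (fact_pos (N - k)).
    apply Rgt_not_eq. apply Rdiv_lt_0_compat; auto. }
  split.
  - rewrite veronese_F by auto. unfold Fv. rewrite Gv_kraw by auto.
    unfold Cdiv. rewrite one_plus, Cpow_mul. unfold hC. rewrite RtoC_inv.
    pose proof (sqrtC_pos N j Hj) as Hs.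
    assert (Hs' : RtoC (sqrt (C N j)) <> Czero) by (apply RtoC_neq; lra).
    rewrite <- (sqrtC_sq N j Hj) at 2.
    fold (ck N k). unfold Rdiv. rewrite !RtoC_mul, RtoC_inv.
    field. auto.
  - intros i Hi.
    rewrite (proj_ext N _ (Fv N k z)) by (auto; intros; apply veronese_F; auto).
    unfold proj. rewrite dotc_FF by auto.
    unfold Fv. rewrite !Gv_kraw by auto.
    rewrite !Cconj_mul, !Cconj_RtoC, hC_conj, Cconj_pow, Cconj_opp, Cconj_conj, Cconj_pow.
    rewrite one_plus.
    assert (EZ : Cmul z (Cconj z) = Cmul (Copp (Cconj z)) (Copp z)) by ring.
    rewrite EZ, Cpow_mul.
    unfold Dn, hC. rewrite <- !RtoC_pow.
    pose proof (sqrtC_pos N i Hi) as Hsi. pose proof (sqrtC_pos N j Hj) as Hsj.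
    rewrite sqrt_mult by (left; apply C_pos; auto).
    rewrite !RtoC_mul, !RtoC_div.
    assert (Ei : RtoC (C N i) = Cmul (RtoC (sqrt (C N i))) (RtoC (sqrt (C N i)))) by (rewrite <- RtoC_mul, sqrtC_sq; auto).
    assert (Ej : RtoC (C N j) = Cmul (RtoC (sqrt (C N j))) (RtoC (sqrt (C N j)))) by (rewrite <- RtoC_mul, sqrtC_sq; auto).
    rewrite Ei, Ej.
    assert (H1 : RtoC (sqrt (C N i)) <> Czero) by (apply RtoC_neq; lra).
    assert (H2 : RtoC (sqrt (C N j)) <> Czero) by (apply RtoC_neq; lra).
    assert (H3 : RtoC ((/ (1 + Cnorm2 z)) ^ k) <> Czero).
    { apply RtoC_neq. apply pow_nonzero. apply Rinv_neq_0_compat. lra. }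
    assert (H4 : RtoC ((1 + Cnorm2 z) ^ N) <> Czero) by (apply RtoC_neq; apply pow_nonzero; lra).
    assert (H5 : RtoC (C N k) <> Czero) by (apply RtoC_neq; apply Rgt_not_eq, C_pos; auto).
    field. repeat split; auto.
Qed.
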